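(* Let $X$ be a Fréchet space and let $\Gamma:[0,1]\to ck(X)$ be Pettis integrable in $ck(X)$. Then every scalarly measurable selection of $\Gamma$ is Pettis integrable.
   Context: $X$ is a Fréchet space, $X^*$ its dual, $ck(X)$ the nonempty compact convex subsets, $\sigma(x^*,C)=\sup_{x\in C}\langle x^*,x\rangle$. Pettis integrable in $ck(X)$ (for a multifunction): $\sigma(x^*,\Gamma(\cdot))$ is Lebesgue integrable for each $x^*\in X^*$ and for each Lebesgue measurable $E\subseteq[0,1]$ there is $x_E\in ck(X)$ with $\sigma(x^*,x_E)=\int_E\sigma(x^*,\Gamma(t))dt$ for all $x^*$. A selection of $\Gamma$ is a function $f:[0,1]\to X$ with $f(t)\in\Gamma(t)$ for a.e. $t$; it is scalarly measurable if $t\mapsto\langle x^*,f(t)\rangle$ is measurable for each $x^*$; a function $f$ is Pettis integrable if $\langle x^*,f(\cdot)\rangle$ is Lebesgue integrable for each $x^*$ and for each measurable $E$ there is $x_E\in X$ with $\langle x^*,x_E\rangle=\int_E\langle x^*,f(t)\rangle dt$ for all $x^*$. *)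

(* Defs.v *)
From HB Require Import structures.
From mathcomp Require Import all_boot all_order all_algebra.
From mathcomp Require Import all_classical all_reals all_analysis.
Set Implicit Arguments. Unset Strict Implicit. Unset Printing Implicit Defensive.
Import Order.TTheory GRing.Theory Num.Theory.
Local Open Scope classical_set_scope.
Local Open Scope ring_scope.

(* The measurable type carrying the (completed) Lebesgue sigma-algebra on R:
   the domain of the completed Lebesgue measure.  Its elements are reals. *)
Notation lebT R :=
  (@caratheodory_type R _ ((@wlength R idfun)^*)%mu).

Notation leb R := (@completed_lebesgue_measure R).

Definition I01 {R : realType} : set (lebT R) := [set t : R | 0 <= t <= 1].

(* Frechet space: a (Hausdorff) locally convex tvs (library tvsType) that is
   metrizable (countable neighbourhood base at 0) and complete. *)
Definition frechet (R : realType) (X : tvsType R) : Prop :=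
  [/\ hausdorff_space X,
      (exists B : nat -> set X,
          (forall n, nbhs (0 : X) (B n)) /\
          (forall U, nbhs (0 : X) U -> exists n, B n `<=` U))
    & (forall F : set_system X, ProperFilter F -> cauchy F -> exists x : X, F --> x)].

Definition dual_elem (R : realType) (X : tvsType R) (xs : {linear X -> R^o}) : Prop :=
  continuous (xs : X -> R^o).

Definition ck (R : realType) (X : tvsType R) (C : set X) : Prop :=
  [/\ C !=set0, compact C & convex_set C].

Definition supp_fun (R : realType) (X : tvsType R) (xs : {linear X -> R^o})
  (C : set X) : R := sup [set (xs x : R) | x in C].

Definition pettis_ck (R : realType) (X : tvsType R) (G : lebT R -> set X) : Prop :=
  (forall t, I01 t -> ck (G t)) /\
  (forall xs : {linear X -> R^o}, dual_elem xs ->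
     (leb R).-integrable I01 (fun t => (supp_fun xs (G t))%:E)) /\
  (forall E : set (lebT R), measurable E -> E `<=` I01 ->
     exists2 xE : set X, ck xE &
       forall xs : {linear X -> R^o}, dual_elem xs ->
         (supp_fun xs xE)%:E = (\int[leb R]_(t in E) (supp_fun xs (G t))%:E)%E).

Definition selection (R : realType) (X : tvsType R) (G : lebT R -> set X)
  (f : lebT R -> X) : Prop :=
  {ae leb R, forall t, I01 t -> G t (f t)}.

Definition scalarly_measurable (R : realType) (X : tvsType R) (f : lebT R -> X) : Prop :=
  forall xs : {linear X -> R^o}, dual_elem xs ->
    measurable_fun I01 (fun t => (xs (f t) : R)).

Definition pettis (R : realType) (X : tvsType R) (f : lebT R -> X) : Prop :=
  (forall xs : {linear X -> R^o}, dual_elem xs ->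
     (leb R).-integrable I01 (fun t => (xs (f t) : R)%:E)) /\
  (forall E : set (lebT R), measurable E -> E `<=` I01 ->
     exists xE : X,
       forall xs : {linear X -> R^o}, dual_elem xs ->
         (xs xE : R)%:E = (\int[leb R]_(t in E) (xs (f t) : R)%:E)%E).

(* Main.v *)
Require Import Defs.
From HB Require Import structures.
From mathcomp Require Import all_boot all_order all_algebra.
From mathcomp Require Import all_classical all_reals all_analysis.
From mathcomp Require Import ring lra measurable_realfun.
Set Implicit Arguments. Unset Strict Implicit. Unset Printing Implicit Defensive.
Import Order.TTheory GRing.Theory Num.Theory.
Local Open Scope classical_set_scope.
Local Open Scope ring_scope.

Section LC.
Variables (R : realType) (X : tvsType R).
Definition lcf (s : seq (R * {linear X -> R^o})) (x : X) : R^o :=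
  \sum_(p <- s) p.1 * p.2 x.
Lemma lcf_linear s : linear (lcf s).
Proof.
move=> a x y; rewrite /lcf scaler_sumr -big_split /=; apply: eq_bigr => p _.
by rewrite linearP mulrDr mulrCA.
Qed.
HB.instance Definition _ s := GRing.isLinear.Build R X R^o *:%R (lcf s) (lcf_linear s).
Lemma lcf_cont s : (forall p, p \in s -> dual_elem p.2) -> dual_elem (lcf s).
Proof.
elim: s => [_|p s IH H]; rewrite /dual_elem /lcf.
  under [X in continuous X]eq_fun do rewrite big_nil.
  move=> x; apply: cvg_cst.
under [X in continuous X]eq_fun do rewrite big_cons.
move=> x; apply: cvgD.
  apply: cvgMl_tmp.
  exact: (H p (mem_head _ _) x).
by apply: IH => q qs; apply: H; rewrite in_cons qs orbT.
Qed.
End LC.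

Section Sup.
Variables (R : realType) (X : tvsType R).

Lemma supp_ub (K : set X) (xs : {linear X -> R^o}) x :
  compact K -> dual_elem xs -> K x -> xs x <= supp_fun xs K.
Proof.
move=> cK dxs Kx; apply: sup_upper_bound; last by exists x.
apply: compact_has_sup; first by exists (xs x), x.
apply: continuous_compact => //; apply: continuous_subspaceT; exact: dxs.
Qed.

Lemma supp_le (K : set X) (xs : {linear X -> R^o}) c :
  K !=set0 -> (forall x, K x -> xs x <= c) -> supp_fun xs K <= c.
Proof.
move=> [x Kx] H; apply: ge_sup; first by exists (xs x), x.
by move=> _ [y Ky <-]; exact: H.
Qed.
End Sup.

Section KeyFin.
Variables (R : realType) (X : tvsType R).
Local Notation L := {linear X -> R^o}.

Lemma sq_cont (phi : L -> R) (s : seq L) : (forall xs, xs \in s -> dual_elem xs) ->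
  continuous (fun x : X => \sum_(xs <- s) (phi xs - xs x) ^+ 2 : R^o).
Proof.
elim: s => [_|p s IH H].
  under [X in continuous X]eq_fun do rewrite big_nil.
  move=> x; apply: cvg_cst.
under [X in continuous X]eq_fun do rewrite big_cons.
move=> x; apply: cvgD; last by apply: IH => q qs; apply: H; rewrite in_cons qs orbT.
under [X in X @ _]eq_fun do rewrite expr2.
apply: cvgM; (apply: cvgB; [apply: cvg_cst | exact: (H p (mem_head _ _) x)]).
Qed.

Lemma key_fin (K : set X) (phi : L -> R) (s : seq L) :
  ck K -> (forall xs, xs \in s -> dual_elem xs) ->
  (forall t : seq (R * L), (forall p, p \in t -> dual_elem p.2) ->
     phi (lcf t) = \sum_(p <- t) p.1 * phi p.2) ->
  (forall xs, dual_elem xs -> phi xs <= supp_fun xs K) ->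
  exists2 x, K x & forall xs, xs \in s -> xs x = phi xs.
Proof.
move=> [K0 cK cvK] ds Hlin Hsup.
pose g (x : X) : R := \sum_(xs <- s) (phi xs - xs x) ^+ 2.
have gc : continuous (g : X -> R^o) by exact: sq_cont.
have [x0 /set_mem Kx0 x0min] := compact_EVT_min K0 cK (continuous_subspaceT gc).
pose a xs := phi xs - xs x0.
pose t := [seq (a xs, xs) | xs <- s].
have dt : forall p, p \in t -> dual_elem p.2 by move=> p /mapP [xs xss ->]; exact: ds.
have yE : forall x, lcf t x = \sum_(xs <- s) a xs * xs x by move=> x; rewrite /lcf big_map.
have claimA : forall x, K x -> lcf t x <= lcf t x0.
  move=> x Kx; rewrite !yE -subr_le0 -sumrB.
  under eq_bigr do rewrite -mulrBr.
  set A := \sum_(xs <- s) _.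
  pose B := \sum_(xs <- s) (xs x - xs x0)^+2.
  have B0 : 0 <= B by apply: sumr_ge0 => ? _; exact: sqr_ge0.
  have key : forall l, 0 <= l -> l <= 1 -> 2 * l * A <= l^+2 * B.
    move=> l l0 l1.
    pose z := l *: x + (1 - l) *: x0.
    have Kz : K z.
      by have /set_mem := cvK x x0 (Itv01 l0 l1) (mem_set Kx) (mem_set Kx0).
    have H := x0min z (mem_set Kz).
    rewrite /g -subr_ge0 -sumrB in H; rewrite -subr_ge0.
    have E : \sum_(xs <- s) ((phi xs - xs z) ^+ 2 - (phi xs - xs x0) ^+ 2) =
        l^+2 * B - 2 * l * A.
      rewrite /A /B mulr_sumr mulr_sumr -sumrB; apply: eq_bigr => xs _.
      rewrite /z linearD !linearZ /= /a.
      rewrite /GRing.scale /=.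
      ring.
    by rewrite -E.
  rewrite leNgt; apply/negP => A0.
  have AB0 : 0 < A + B by rewrite ltr_wpDr.
  pose l := A / (A + B).
  have l0 : 0 < l by rewrite divr_gt0.
  have hl : l * (A + B) = A by rewrite /l divfK // gt_eqF.
  have l1 : l <= 1 by rewrite /l ler_pdivrMr // mul1r lerDl.
  have := key l (ltW l0) l1.
  nra.
have supA : supp_fun (lcf t) K <= lcf t x0 by apply: supp_le => //; exact: claimA.
have := Hsup _ (lcf_cont dt); rewrite (Hlin _ dt) big_map /= => H1.
have := le_trans H1 supA; rewrite yE -subr_le0 -sumrB.
under eq_bigr do rewrite -mulrBr.
move=> H2.
have Hs : \sum_(xs <- s) a xs * a xs = 0.
  apply/eqP; rewrite eq_le; apply/andP; split; first exact: H2.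
  by apply: sumr_ge0 => ? _; rewrite -expr2 sqr_ge0.
exists x0 => // xs xss.
move/eqP: Hs; rewrite psumr_eq0; last by move=> ? _; rewrite -expr2 sqr_ge0.
move/allP/(_ _ xss); rewrite mulf_eq0 orbb /a subr_eq0 => /eqP.
by move=> ->.
Qed.
End KeyFin.

Section Key.
Variables (R : realType) (X : tvsType R).
Local Notation L := {linear X -> R^o}.

Lemma key (K : set X) (phi : L -> R) :
  ck K ->
  (forall t : seq (R * L), (forall p, p \in t -> dual_elem p.2) ->
     phi (lcf t) = \sum_(p <- t) p.1 * phi p.2) ->
  (forall xs, dual_elem xs -> phi xs <= supp_fun xs K) ->
  exists2 x, K x & forall xs, dual_elem xs -> xs x = phi xs.
Proof.
move=> ckK Hlin Hsup; have [K0 cK _] := ckK.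
pose D := @dual_elem R X.
pose g := fun xs : L => [set x : X | xs x = phi xs].
pose f := fun xs : L => K `&` g xs.
have gcl : forall xs, D xs -> closed (g xs).
  move=> xs dxs.
  have -> : g xs = (xs : X -> R^o) @^-1` [set y | y = phi xs] by [].
  apply: preimage_closed; last exact: closed_eq.
  by move=> x _; exact: dxs.
have finIf : finI D f.
  move=> D' sD'.
  have [x Kx Hx] := key_fin (s := finmap.enum_fset D') ckK (fun xs xsD => set_mem (sD' xs xsD)) Hlin Hsup.
  by exists x => xs /= xsD; split => //; apply: Hx.
have D0 : D (lcf [::]) by apply: lcf_cont => p; rewrite in_nil.
have [|p [Kp clp]] := cK _ (finI_filter finIf).
  by exists (f (lcf [::])); [apply: finI_from1|move=> ? []].
exists p => // xs dxs; apply: (gcl xs dxs) => B Bp.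
by apply: clp => //; exists (f xs); [apply: finI_from1|move=> ? []].
Qed.
End Key.

Lemma mI01 (R : realType) : measurable (I01 : set (lebT R)).
Proof.
have h : measurable (`[0%R, 1%R]%classic : set (measurableTypeR R)) by exact: measurable_itv.
have := @sub_caratheodory _ _ R (@wlength R idfun) _ h.
have E : [set t : R | 0 <= t <= 1] = `[0%R, 1%R]%classic.
  by apply/seteqP; split => x /=; rewrite in_itv.
by rewrite /I01 E.
Qed.

Section Main.
Variables (R : realType) (X : tvsType R) (G : lebT R -> set X) (f : lebT R -> X).
Local Notation L := {linear X -> R^o}.
Hypothesis HGck : forall t, I01 t -> ck (G t).
Hypothesis Hint : forall xs : L, dual_elem xs ->
     (leb R).-integrable I01 (fun t => (supp_fun xs (G t))%:E).
Variable N : set (lebT R).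
Hypothesis mN : measurable N.
Hypothesis N0 : leb R N = 0%E.
Hypothesis HN : forall t, ~ N t -> I01 t -> G t (f t).
Hypothesis Hmeas : forall xs : L, dual_elem xs ->
    measurable_fun I01 (fun t => (xs (f t) : R)).

Lemma sel_ub (xs : L) t : dual_elem xs -> ~ N t -> I01 t -> xs (f t) <= supp_fun xs (G t).
Proof.
move=> dxs Nt It; have [_ cG _] := HGck It.
exact: supp_ub cG dxs (HN Nt It).
Qed.

Lemma int_sel (xs : L) : dual_elem xs -> (leb R).-integrable I01 (fun t => (xs (f t) : R)%:E).
Proof.
move=> dxs.
pose ys : L := lcf [:: (-1, xs)].
have dys : dual_elem ys by apply: lcf_cont => p; rewrite mem_seq1 => /eqP ->.
have mf : measurable_fun I01 (fun t => (xs (f t) : R)%:E).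
  by apply/measurable_EFinP; exact: Hmeas.
have mD : measurable (I01 `\` N) by apply: measurableD => //; exact: mI01.
have iD : (leb R).-integrable (I01 `\` N) (fun t => (xs (f t) : R)%:E).
  apply: (@le_integrable _ _ _ _ _ mD _ (fun t => (`|supp_fun xs (G t)| + `|supp_fun ys (G t)|)%:E)).
  - apply: measurable_funS mf. all: try exact: mI01. all: try by move=> t [].
  - move=> t [It Nt]; rewrite !abse_EFin lee_fin [X in _ <= X]ger0_norm ?addr_ge0 //.
    have h1 := sel_ub dxs Nt It; have h2 := sel_ub dys Nt It.
    have : ys (f t) = - xs (f t) by rewrite /= /lcf big_cons big_nil addr0 mulN1r.
    move=> e; rewrite e in h2.
    rewrite ler_norml; apply/andP; split.
      rewrite lerNl; apply: (le_trans h2); rewrite (le_trans (ler_norm _)) // lerDr //.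
    apply: (le_trans h1); rewrite (le_trans (ler_norm _)) // lerDl //.
  - have i1 := integrableS (@mI01 R) mD (@subDsetl _ _ _) (Hint dxs).
    have i2 := integrableS (@mI01 R) mD (@subDsetl _ _ _) (Hint dys).
    apply: (eq_integrable mD ((abse \o (fun t => (supp_fun xs (G t))%:E)) \+ (abse \o (fun t => (supp_fun ys (G t))%:E)))).
      by move=> t _; rewrite /= EFinD.
    by apply: integrableD => //; apply: integrable_abse.
apply/integrableP; split => //.
rewrite (ge0_negligible_integral mN (@mI01 R)) //; last first.
  by apply: measurableT_comp.
by case/integrableP: iD.
Qed.

Lemma pettis_E (E : set (lebT R)) (xE : set X) :
  measurable E -> E `<=` I01 -> ck xE ->
  (forall xs : L, dual_elem xs ->
     (supp_fun xs xE)%:E = (\int[leb R]_(t in E) (supp_fun xs (G t))%:E)%E) ->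
  exists xe : X, forall xs : L, dual_elem xs ->
     (xs xe : R)%:E = (\int[leb R]_(t in E) (xs (f t) : R)%:E)%E.
Proof.
move=> mE EI ckE HE.
have iE : forall xs : L, dual_elem xs -> (leb R).-integrable E (fun t => (xs (f t) : R)%:E).
  by move=> xs dxs; apply: integrableS (@mI01 R) mE EI (int_sel dxs).
pose phi (xs : L) : R := fine (\int[leb R]_(t in E) (xs (f t) : R)%:E)%E.
have phiE : forall xs, dual_elem xs ->
    (\int[leb R]_(t in E) (xs (f t) : R)%:E)%E = (phi xs)%:E.
  by move=> xs dxs; rewrite fineK //; exact: (integrable_fin_num mE (iE _ dxs)).
have Hlin : forall t : seq (R * L), (forall p, p \in t -> dual_elem p.2) ->
     phi (lcf t) = \sum_(p <- t) p.1 * phi p.2.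
  elim => [_|p t IH H].
    rewrite big_nil /phi.
    under eq_integral do rewrite /= /lcf big_nil.
    by rewrite integral0.
  have dp : dual_elem p.2 by apply: H; exact: mem_head.
  have dt : forall q, q \in t -> dual_elem q.2.
    by move=> q qt; apply: H; rewrite in_cons qt orbT.
  apply: EFin_inj; rewrite big_cons -(IH dt) EFinD EFinM.
  rewrite -(phiE _ (lcf_cont H)) -(phiE _ (lcf_cont dt)) -(phiE _ dp).
  rewrite -integralZl //; last exact: iE.
  rewrite -integralD //; last exact: (iE _ (lcf_cont dt)).
    by apply: eq_integral => s _; rewrite /= /lcf big_cons EFinD EFinM.
  exact: integrableZl (iE _ dp).
have Hsup : forall xs, dual_elem xs -> phi xs <= supp_fun xs xE.
  move=> xs dxs; rewrite -lee_fin -phiE // HE //.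
  have iS := integrableS (@mI01 R) mE EI (Hint dxs).
  have mD : measurable (E `\` N) by apply: measurableD.
  rewrite (negligible_integral mN mE (iE _ dxs)) // (negligible_integral mN mE iS) //.
  apply: le_integral => //.
  - exact: integrableS mE mD (@subDsetl _ _ _) (iE _ dxs).
  - exact: integrableS mE mD (@subDsetl _ _ _) iS.
  - by move=> t /set_mem [Et Nt]; rewrite lee_fin; apply: sel_ub => //; exact: EI.
have [x _ Hx] := key ckE Hlin Hsup.
by exists x => xs dxs; rewrite Hx // phiE.
Qed.
End Main.

Unset Implicit Arguments.
Theorem corollary4p8 (R : realType) (X : tvsType R) (G : lebT R -> set X) :
  frechet X -> pettis_ck G ->
  forall f : lebT R -> X, selection G f -> scalarly_measurable f -> pettis f.
Proof.
move=> _ [HGck [Hint Hset]] f Hsel Hmeas.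
have [N [mN N0 HN']] := Hsel.
have HN : forall t, ~ N t -> I01 t -> G t (f t).
  move=> t Nt It; apply: contrapT => h; apply: Nt; apply: HN' => /= h'.
  by apply: h; exact: h'.
split.
- by move=> xs dxs; exact: (int_sel HGck Hint mN N0 HN Hmeas dxs).
- move=> E mE EI; have [xE ckE HE] := Hset E mE EI.
  exact: (pettis_E HGck Hint mN N0 HN Hmeas mE EI ckE HE).
Qed.
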